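(* If $\mathcal C=\mathrm{code}(\mathcal H,X)\subseteq 2^{[n]}$ is the code of a stable hyperplane arrangement $(\mathcal H,X)$, then $\Gamma(\mathcal C)=\mathrm{nerve}(\{H_i^+\cap X,\ H_i^-\cap X\}_{i\in[n]})$, where the vertex $i$ corresponds to the set $H_i^+\cap X$ and the vertex $\bar i$ to the set $H_i^-\cap X$.
   Context: An oriented affine hyperplane is $H_i=\{x:w_i\cdot x-h_i=0\}$ with $w_i\neq0$, $H_i^+=\{w_i\cdot x-h_i>0\}$, $H_i^-=\{w_i\cdot x-h_i<0\}$. For $\mathcal H=\{H_1,\dots,H_n\}$ and open convex $X\subseteq\mathbb R^d$, the atom of $\sigma$ is $A_\sigma=\bigl(\bigcap_{i\in\sigma}(H_i^+\cap X)\bigr)\setminus\bigcup_{j\notin\sigma}H_j^+$ ($A_\emptyset=X\setminus\bigcup_iH_i^+$), and $\mathrm{code}(\mathcal H,X)=\{\sigma:A_\sigma\ne\emptyset\}$. $(\mathcal H,X)$ is stable if $X$ is open convex and whenever $X\cap\bigcap_{i\in\sigma}H_i\ne\emptyset$, $\dim\bigcap_{i\in\sigma}H_i=d-|\sigma|$. The polar complex $\Gamma(\mathcal C)$ is the simplicial complex on $[n]\sqcup\{\bar1,\dots,\bar n\}$ consisting of all subsets of the sets $\Sigma(\sigma)=\sigma\sqcup\{\bar i:i\in[n]\setminus\sigma\}$, $\sigma\in\mathcal C$. The nerve of a family of sets $\{V_v\}_{v\in V}$ is $\{S\subseteq V:\bigcap_{v\in S}V_v\neq\emptyset\}$. *)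

(* Defs.v *)
From HB Require Import structures.
From mathcomp Require Import all_boot all_order all_algebra.
From mathcomp Require Import all_classical all_reals all_analysis.
From mathcomp Require Import matrix_normedtype.
Set Implicit Arguments. Unset Strict Implicit. Unset Printing Implicit Defensive.
Import Order.TTheory GRing.Theory Num.Theory numFieldNormedType.Exports.
Local Open Scope ring_scope.
Local Open Scope classical_set_scope.

Section Arr.
Variables (R : realType) (d n : nat).

(* points of R^d are row vectors 'rV[R]_d, with the canonical (norm) topology *)
Definition vdot (w x : 'rV[R]_d) : R := \sum_(j < d) w ord0 j * x ord0 j.

Definition Hyp (w : 'I_n -> 'rV[R]_d) (h : 'I_n -> R) (i : 'I_n) : set 'rV[R]_d :=
  [set x | vdot (w i) x - h i = 0].
Definition Hpos (w : 'I_n -> 'rV[R]_d) (h : 'I_n -> R) (i : 'I_n) : set 'rV[R]_d :=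
  [set x | vdot (w i) x - h i > 0].
Definition Hneg (w : 'I_n -> 'rV[R]_d) (h : 'I_n -> R) (i : 'I_n) : set 'rV[R]_d :=
  [set x | vdot (w i) x - h i < 0].

Definition convex_set (X : set 'rV[R]_d) : Prop :=
  forall x y (t : R), X x -> X y -> 0 <= t -> t <= 1 -> X ((1 - t) *: x + t *: y).

Definition hatom (w : 'I_n -> 'rV[R]_d) (h : 'I_n -> R) (X : set 'rV[R]_d)
    (sigma : {set 'I_n}) : set 'rV[R]_d :=
  [set x | X x /\ (forall i, i \in sigma -> Hpos w h i x)
               /\ (forall j, j \notin sigma -> ~ Hpos w h j x)].

Definition hcode (w : 'I_n -> 'rV[R]_d) (h : 'I_n -> R) (X : set 'rV[R]_d)
  : {set {set 'I_n}} :=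
  [set sigma | `[< hatom w h X sigma !=set0 >]].

Definition Hcap (w : 'I_n -> 'rV[R]_d) (h : 'I_n -> R) (sigma : {set 'I_n})
  : set 'rV[R]_d := [set x | forall i, i \in sigma -> Hyp w h i x].

(* "dim S = k" for a nonempty affine set S: k is the dimension of its
   direction space {x - y | x, y in S}, i.e. the maximal number of linearly
   independent vectors in it. *)
Definition in_dir (S : set 'rV[R]_d) (v : 'rV[R]_d) : Prop :=
  exists x y, S x /\ S y /\ v = x - y.
Definition affine_dim (S : set 'rV[R]_d) (k : nat) : Prop :=
  (exists M : 'M[R]_(k, d), row_free M /\ forall r, in_dir S (row r M)) /\
  (forall M : 'M[R]_(k.+1, d), (forall r, in_dir S (row r M)) -> ~~ row_free M).

(* stability; "dim = d - |sigma|" is written k + |sigma| = d to avoid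
   truncated subtraction on nat *)
Definition stable_arr (w : 'I_n -> 'rV[R]_d) (h : 'I_n -> R) (X : set 'rV[R]_d) : Prop :=
  open X /\ convex_set X /\
  forall sigma : {set 'I_n}, (X `&` Hcap w h sigma) !=set0 ->
    exists k, affine_dim (Hcap w h sigma) k /\ (k + #|sigma| = d)%N.

(* vertices: inl i = i, inr i = \bar i *)
Definition Sigma (sigma : {set 'I_n}) : {set 'I_n + 'I_n} :=
  (inl @: sigma) :|: (inr @: ~: sigma).

Definition polar_complex (C : {set {set 'I_n}}) : {set {set 'I_n + 'I_n}} :=
  [set S : {set 'I_n + 'I_n} | [exists sigma in C, S \subset Sigma sigma]].

Definition vset (w : 'I_n -> 'rV[R]_d) (h : 'I_n -> R) (X : set 'rV[R]_d)
    (v : 'I_n + 'I_n) : set 'rV[R]_d :=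
  match v with
  | inl i => Hpos w h i `&` X
  | inr i => Hneg w h i `&` X
  end.

(* hnerve; intersections are taken inside the ambient X (only matters for
   the empty face) *)
Definition hnerve (w : 'I_n -> 'rV[R]_d) (h : 'I_n -> R) (X : set 'rV[R]_d)
  : {set {set 'I_n + 'I_n}} :=
  [set S : {set 'I_n + 'I_n} | `[< exists x, X x /\ forall v, v \in S -> vset w h X v x >]].

End Arr.

(* Main.v *)
Require Import Defs.
From HB Require Import structures.
From mathcomp Require Import all_boot all_order all_algebra.
From mathcomp Require Import all_classical all_reals all_analysis.
From mathcomp Require Import matrix_normedtype.
From mathcomp Require Import ring lra zify.
Import Order.TTheory GRing.Theory Num.Theory numFieldNormedType.Exports.
Local Open Scope ring_scope.
Local Open Scope classical_set_scope.

Lemma near0_pos (R : realType) (Q : R -> Prop) : (\forall e \near (0:R), Q e) -> exists e : R, 0 < e /\ Q e.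
Proof.
move=> H.
have [eps /= eps0 Heps] := (@nbhs_ballP R R 0 _).1 H.
exists (eps/2); split; first by rewrite divr_gt0.
apply: Heps; rewrite /ball /= sub0r normrN gtr0_norm ?divr_gt0 //; lra.
Qed.

Section S.
Variables (R : realType) (d n : nat) (w : 'I_n -> 'rV[R]_d) (h : 'I_n -> R).

Lemma vdotB (a x y : 'rV[R]_d) : vdot a (x - y) = vdot a x - vdot a y.
Proof. rewrite /vdot -sumrB; apply: eq_bigr => j _; rewrite !mxE; ring. Qed.

Lemma vdotDZ (a x y : 'rV[R]_d) (e : R) : vdot a (x + e *: y) = vdot a x + e * vdot a y.
Proof. rewrite /vdot mulr_sumr -big_split; apply: eq_bigr => j _ /=; rewrite !mxE; ring. Qed.

Definition Amat (tau : {set 'I_n}) : 'M[R]_(d, #|tau|) :=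
  \matrix_(i, j) (w (enum_val j)) ord0 i.

Lemma AmatE (tau : {set 'I_n}) (u : 'rV[R]_d) j :
  (u *m Amat tau) ord0 j = vdot (w (enum_val j)) u.
Proof. rewrite /vdot !mxE; apply: eq_bigr => i _; by rewrite mxE mulrC. Qed.

Lemma lin_sol (X : set 'rV[R]_d) (tau : {set 'I_n}) (x : 'rV[R]_d) :
  stable_arr w h X -> X x -> Hcap w h tau x ->
  exists u : 'rV[R]_d, forall i, i \in tau -> vdot (w i) u = -1.
Proof.
move=> [_ [_ st]] Xx Hx.
have [k [[_ Hk] kt]] := st tau (ex_intro _ x (conj Xx Hx)).
set A := Amat tau.
suff /row_fullP [B BA] : row_full A.
  exists (- (const_mx 1 : 'rV[R]_#|tau|) *m B) => i itau.
  have := AmatE tau (- (const_mx 1 : 'rV[R]_#|tau|) *m B) (enum_rank_in itau i).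
  rewrite enum_rankK_in // -mulmxA BA mulmx1 !mxE => <-; done.
rewrite /row_full eqn_leq rank_leq_col /=.
rewrite leqNgt; apply/negP => rlt.
set K := kermx A.
have rK : (k.+1 + (\rank K - k.+1) = \rank K)%N.
  rewrite mxrank_ker; have [rr Er] : exists rr : nat, \rank A = rr by eexists. rewrite Er in rlt *. have rlt2 : (rr < #|tau|)%N by exact: rlt. lia.
pose m2 := (\rank K - k.+1)%N.
pose B' := (castmx (esym rK, erefl) (row_base K) : 'M[R]_((k.+1 + m2)%N, d)).
have fB' : row_free B' by rewrite row_free_castmx row_base_free.
have B'sub : (B' <= K)%MS by rewrite eqmx_cast eq_row_base.
have fU : row_free (usubmx B').
  apply/inj_row_free => v vM.
  have : row_mx v 0 *m B' = 0.
    by rewrite -[B']vsubmxK mul_row_col vM mul0mx addr0.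
  rewrite -(mul0mx _ B') => /(row_free_inj fB') /eqP; rewrite row_mx_eq0 => /andP[/eqP -> _]; done.
apply: (negP (Hk (usubmx B') _)) => // r.
have : (row r (usubmx B') <= K)%MS.
  by rewrite row_usubmx; apply: submx_trans B'sub; apply: row_sub.
move/sub_kermxP => rA.
exists x, (x - row r (usubmx B')); split => //; split; last by rewrite opprB addrC subrK.
move=> i itau; have := Hx i itau; rewrite /Hyp /= vdotB => H0.
have := AmatE tau (row r (usubmx B')) (enum_rank_in itau i).
rewrite enum_rankK_in // rA mxE => <-; rewrite subr0 //.
Qed.

Lemma lin_cvg (a c : R) : (fun e : R => a + e * c) @ nbhs (0:R) --> a.
Proof.
rewrite -[Z in _ --> Z]addr0 -[Z in _ --> _ + Z](mul0r c).
apply: cvgD; first exact: cvg_cst.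
by apply: cvgMr_tmp; exact: cvg_id.
Qed.

Lemma perturb (X : set 'rV[R]_d) (sigma : {set 'I_n}) (x : 'rV[R]_d) :
  stable_arr w h X -> hatom w h X sigma x ->
  exists y, X y /\ (forall i, i \in sigma -> Hpos w h i y) /\
            (forall j, j \notin sigma -> Hneg w h j y).
Proof.
move=> st [Xx [Hp Hn]].
pose tau := finset (fun j : 'I_n => (j \notin sigma) && (vdot (w j) x - h j == 0)).
have Hx : Hcap w h tau x by move=> j; rewrite inE => /andP[_ /eqP].
have [u Hu] := lin_sol _ _ _ st Xx Hx.
pose f (e : R) := x + e *: u.
have cf : f @ nbhs (0:R) --> x.
  have -> : x = x + 0 *: u by rewrite scale0r addr0.
  apply: cvgD; first exact: cvg_cst.
  by apply: cvgZr_tmp; exact: cvg_id.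
have nX : \forall e \near (0:R), X (f e).
  apply: cf; apply: open_nbhs_nbhs; split => //; exact: st.1.
have nI : \forall e \near (0:R), forall i,
    (i \in sigma -> 0 < vdot (w i) (f e) - h i) /\
    (i \notin sigma -> i \notin tau -> vdot (w i) (f e) - h i < 0).
  pose P i e := (i \in sigma -> 0 < vdot (w i) (f e) - h i) /\
    (i \notin sigma -> i \notin tau -> vdot (w i) (f e) - h i < 0).
  apply: (@filter_forall _ _ P (nbhs (0:R)) (nbhs_filter 0)) => i.
  have E : forall e, vdot (w i) (f e) - h i = (vdot (w i) x - h i) + e * vdot (w i) u.
    by move=> e; rewrite /f vdotDZ addrAC.
  case: (boolP (i \in sigma)) => iS.
    have H1 := cvgr_gt _ (lin_cvg (vdot (w i) x - h i) (vdot (w i) u)) 0 (Hp i iS).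
    have K : forall e, 0 < vdot (w i) x - h i + e * vdot (w i) u -> P i e.
      by move=> e; rewrite -E => H; split => //; rewrite iS.
    exact: (filterS K (H1 (nbhs_filter _))).
  case: (boolP (i \in tau)) => iT.
    have K : forall e, True -> P i e.
      move=> e _; split; first by rewrite (negbTE iS).
      by rewrite iT.
    exact: (filterS K (@filterT _ (nbhs (0:R)) _)).
  have neg : vdot (w i) x - h i < 0.
    have := Hn i iS; rewrite /Hpos /= => H.
    rewrite lt_neqAle; apply/andP; split.
      by apply: contra iT => /eqP e0; rewrite inE iS e0 eqxx.
    by rewrite leNgt; apply/negP.
  have H1 := cvgr_lt _ (lin_cvg (vdot (w i) x - h i) (vdot (w i) u)) 0 neg.
  have K : forall e, vdot (w i) x - h i + e * vdot (w i) u < 0 -> P i e.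
    move=> e; rewrite -E => H; split => [Hin|//]; by case/negP: iS.
  exact: (filterS K (H1 (nbhs_filter _))).
have [e [e0 [Xy Py]]] := near0_pos _ _ (filterI nX nI).
exists (f e); split => //; split.
  by move=> i iS; have [+ _] := Py i; move/(_ iS).
move=> j jS; case: (boolP (j \in tau)) => jT.
  rewrite /Hneg /= /f vdotDZ Hu // addrAC.
  move: jT; rewrite inE jS /= => /eqP ->; by rewrite add0r mulrN1 oppr_lt0.
by have [_ +] := Py j; move/(_ jS jT).
Qed.
End S.

Theorem lemma2p9 (R : realType) (d n : nat) (w : 'I_n -> 'rV[R]_d) (h : 'I_n -> R)
    (X : set 'rV[R]_d) :
  (forall i : 'I_n, w i <> 0) ->
  stable_arr w h X ->
  polar_complex (hcode w h X) = hnerve w h X.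
Proof.
move=> _ st; apply/setP => S; rewrite !inE.
apply/idP/idP.
  case/existsP => sigma /andP[sC sS]; apply/asboolP.
  move: sC; rewrite inE => /asboolP [x Ax].
  have [y [Xy [Hp Hn]]] := perturb _ _ _ _ _ _ _ _ st Ax.
  exists y; split => // -[i|i] /(fintype.subsetP sS); rewrite /Sigma inE.
    case/orP => /imsetP [j jin eq] //; case: eq => ->; split => //; exact: Hp.
  case/orP => /imsetP [j jin eq] //; case: eq => ->; split => //; apply: Hn.
  by move: jin; rewrite inE.
move/asboolP => [x [Xx Hx]].
apply/existsP; exists (finset (fun i => `[< Hpos w h i x >])).
apply/andP; split.
  rewrite inE; apply/asboolP; exists x; split => //; split => i; rewrite inE.
    by move/asboolP.
  by move=> /negP H HP; apply: H; apply/asboolP.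
apply/fintype.subsetP => -[i|i] /Hx [H1 _]; rewrite /Sigma inE; apply/orP; [left|right];
  apply/imsetP; exists i => //; rewrite !inE.
  exact: H1.
apply/negP => /asboolP; rewrite /Hpos /=; move: H1; rewrite /Hneg /= => H1 H2.
by have := lt_trans H1 H2; rewrite ltxx.
Qed.
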